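(* Let $D,\chi,\varepsilon>0$, $a\ge 0$, $\beta\ge 0$, $b=D\beta^2$. Then there are no $0<r_0<r_1$ and functions $\rho\in C^0[0,\infty)$, $\phi\in C^2[0,\infty)$ with $\rho\ge0$, $\phi(0)\ge0$, such that $\rho\equiv 0$ on $[0,r_0]\cup[r_1,\infty)$, $\rho>0$ on $(r_0,r_1)$, $\rho$ is symmetric about $(r_0+r_1)/2$ on $(r_0,r_1)$ (i.e. $\rho(r_0+s)=\rho(r_1-s)$ for $s\in(0,r_1-r_0)$), $\rho$ is differentiable on $(r_0,r_1)$ with $\varepsilon\rho\rho_r=\chi\rho\phi_r$ there, and $D\phi_{rr}+D\frac{\phi_r}{r}+a\rho-b\phi=0$ on $(0,\infty)$.
   Context: The system $\partial_r(\frac{\varepsilon}{2}\rho^2)=\chi\rho\phi_r$, $D\phi_{rr}+D\phi_r/r+a\rho-b\phi=0$ is the radially symmetric stationary form of a hyperbolic-parabolic chemotaxis model on $\mathbb{R}^2$ with pressure $p(\rho)=\frac{\varepsilon}{2}\rho^2$; $r=|x|$. *)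

(* Defs.v *)
From Stdlib Require Import Reals.
From Coquelicot Require Import Coquelicot.
Open Scope R_scope.

Definition cont_on_halfline (f : R -> R) : Prop :=
  (forall r, 0 < r -> continuous f r) /\
  filterlim f (at_right 0) (locally (f 0)).

(* f is C^2 on [0, +oo) with first and second derivatives df, ddf:
   derivatives on (0,+oo), and f, df, ddf continuous on [0,+oo)
   (this forces df(0), ddf(0) to be the one-sided derivatives at 0). *)
Definition C2_on_halfline (f df ddf : R -> R) : Prop :=
  (forall r, 0 < r -> is_derive f r (df r)) /\
  (forall r, 0 < r -> is_derive df r (ddf r)) /\
  cont_on_halfline f /\ cont_on_halfline df /\ cont_on_halfline ddf.

(* Main.v *)
Require Import Defs.
From Stdlib Require Import Reals Lra.
From Coquelicot Require Import Coquelicot.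
Open Scope R_scope.

Lemma const_of_deriv0 (f : R -> R) a b :
  (forall x, a < x < b -> is_derive f x 0) ->
  forall x y, a < x < b -> a < y < b -> f x = f y.
Proof.
  intros Hd x y Hx Hy.
  destruct (MVT_gen f x y (fun _ => 0)) as [c [_ Hc]].
  - intros z Hz. apply Hd. unfold Rmin, Rmax in Hz.
    destruct (Rle_dec x y); lra.
  - intros z Hz. apply continuity_pt_filterlim.
    apply (ex_derive_continuous f z). exists 0. apply Hd.
    unfold Rmin, Rmax in Hz. destruct (Rle_dec x y); lra.
  - lra.
Qed.

Lemma loc_int (a b r : R) : a < r < b -> locally r (fun t => a < t < b).
Proof.
  intros H.
  assert (He : 0 < Rmin (r - a) (b - r)) by (apply Rmin_pos; lra).
  exists (mkposreal _ He). intros t Ht.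
  change (Rabs (t - r) < Rmin (r - a) (b - r)) in Ht.
  apply Rabs_def2 in Ht.
  pose proof (Rmin_l (r - a) (b - r)). pose proof (Rmin_r (r - a) (b - r)). lra.
Qed.
Lemma refl_derive (g : R -> R) L r l : is_derive g (L - r) l -> is_derive (fun x => g (L - x)) r (- l).
Proof.
  intros H.
  assert (Hm : is_derive (fun x => L - x) r (-1)).
  { auto_derive; auto; ring. }
  pose proof (is_derive_comp g (fun x => L - x) r l (-1) H Hm) as Hc.
  replace (- l) with (scal (-1) l); [exact Hc|].
  unfold scal; simpl; unfold mult; simpl; ring.
Qed.

Theorem mainTheorem4 (D chi eps a beta : R) :
  0 < D -> 0 < chi -> 0 < eps -> 0 <= a -> 0 <= beta ->
  ~ (exists (r0 r1 : R) (rho phi dphi ddphi : R -> R),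
        0 < r0 /\ r0 < r1 /\
        cont_on_halfline rho /\
        C2_on_halfline phi dphi ddphi /\
        (forall r, 0 <= r -> 0 <= rho r) /\
        0 <= phi 0 /\
        (forall r, 0 <= r <= r0 -> rho r = 0) /\
        (forall r, r1 <= r -> rho r = 0) /\
        (forall r, r0 < r < r1 -> 0 < rho r) /\
        (forall s, 0 < s < r1 - r0 -> rho (r0 + s) = rho (r1 - s)) /\
        (forall r, r0 < r < r1 ->
           ex_derive rho r /\ eps * rho r * Derive rho r = chi * rho r * dphi r) /\
        (forall r, 0 < r ->
           D * ddphi r + D * dphi r / r + a * rho r - (D * beta ^ 2) * phi r = 0)).
Proof.
  intros HD Hchi Heps Ha Hb.
  intros (r0 & r1 & rho & phi & dphi & ddphi & H0 & H01 & [Hrc _] & [Hp1 [Hp2 _]]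
          & _ & _ & Hz0 & _ & Hpos & Hsym & Hder & Heq).
  set (L := r0 + r1).
  assert (HI : forall r, r0 < r < r1 -> r0 < L - r < r1) by (intros; unfold L; lra).
  assert (S1 : forall r, r0 < r < r1 -> rho r = rho (L - r)).
  { intros r Hr. replace r with (r0 + (r - r0)) at 1 by ring.
    rewrite Hsym by lra. f_equal. unfold L; ring. }
  assert (Drho : forall r, r0 < r < r1 -> is_derive rho r (Derive rho r)).
  { intros r Hr. apply Derive_correct. apply Hder; auto. }
  assert (S2 : forall r, r0 < r < r1 -> Derive rho r = - Derive rho (L - r)).
  { intros r Hr. apply is_derive_unique.
    apply (is_derive_ext_loc (fun x => rho (L - x))).
    - apply (filter_imp (fun t => r0 < t < r1)); [|apply loc_int; auto].
      intros t Ht. symmetry. apply S1; auto.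
    - apply refl_derive. apply Drho; auto. }
  assert (S3 : forall r, r0 < r < r1 -> dphi r = eps / chi * Derive rho r).
  { intros r Hr. destruct (Hder r Hr) as [_ He]. pose proof (Hpos r Hr).
    apply Rmult_eq_reg_l with (chi * rho r).
    - rewrite <- He. field. lra.
    - apply Rmult_integral_contrapositive; split; lra. }
  assert (S4 : forall r, r0 < r < r1 -> dphi r = - dphi (L - r)).
  { intros r Hr. rewrite S3, S3, S2 by auto. ring. }
  assert (S5 : forall r, r0 < r < r1 -> ddphi r = ddphi (L - r)).
  { intros r Hr.
    assert (Hd : is_derive (fun x => - dphi (L - x)) r (ddphi (L - r))).
    { replace (ddphi (L - r)) with (- - ddphi (L - r)) by ring.
      apply (is_derive_opp (fun x => dphi (L - x))).
      apply refl_derive. apply Hp2. pose proof (HI r Hr); lra. }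
    assert (Hd2 : is_derive (fun x => - dphi (L - x)) r (ddphi r)).
    { apply (is_derive_ext_loc dphi).
      - apply (filter_imp (fun t => r0 < t < r1)); [|apply loc_int; auto].
        intros t Ht. apply S4; auto.
      - apply Hp2; lra. }
    apply is_derive_unique in Hd. apply is_derive_unique in Hd2. congruence. }
  assert (S6 : forall x y, r0 < x < r1 -> r0 < y < r1 ->
             eps * rho x - chi * phi x = eps * rho y - chi * phi y).
  { apply (const_of_deriv0 (fun t => eps * rho t - chi * phi t)).
    intros x Hx.
    assert (Hd : is_derive (fun t => eps * rho t - chi * phi t) x
                   (eps * Derive rho x - chi * dphi x)).
    { apply (is_derive_minus (fun t => eps * rho t) (fun t => chi * phi t)).
      - apply is_derive_scal. apply Drho; auto.
      - apply is_derive_scal. apply Hp1; lra. }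
    replace 0 with (eps * Derive rho x - chi * dphi x); auto.
    rewrite S3 by auto. field. lra. }
  assert (S7 : forall r, r0 < r < r1 -> phi r = phi (L - r)).
  { intros r Hr. pose proof (S6 r (L - r) Hr (HI r Hr)). rewrite <- S1 in H by auto.
    apply Rmult_eq_reg_l with chi; lra. }
  assert (S8 : forall r, r0 < r < r1 -> dphi r = 0).
  { intros r Hr. pose proof (HI r Hr).
    pose proof (Heq r ltac:(lra)) as E1. pose proof (Heq (L - r) ltac:(lra)) as E2.
    rewrite <- S5, <- S1, <- S7 in E2 by auto.
    assert (Hs : D * dphi r / r - D * dphi (L - r) / (L - r) = 0) by lra.
    rewrite <- (Ropp_involutive (dphi (L - r))), <- S4 in Hs by auto.
    assert (Hs2 : D * dphi r * (L / (r * (L - r))) = 0).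
    { rewrite <- Hs. field. split; lra. }
    apply Rmult_integral in Hs2. destruct Hs2 as [Hs2|Hs2].
    - apply Rmult_integral in Hs2. destruct Hs2; lra.
    - exfalso. assert (0 < L / (r * (L - r))).
      { apply Rdiv_lt_0_compat; [unfold L; lra|]. apply Rmult_lt_0_compat; lra. }
      lra. }
  assert (S9 : forall x y, r0 < x < r1 -> r0 < y < r1 -> rho x = rho y).
  { apply const_of_deriv0. intros x Hx.
    replace 0 with (Derive rho x); [apply Drho; auto|].
    pose proof (S8 x Hx). rewrite S3 in H by auto.
    apply Rmult_integral in H. destruct H as [H|H]; auto.
    exfalso. assert (0 < eps / chi) by (apply Rdiv_lt_0_compat; lra). lra. }
  set (m := (r0 + r1) / 2).
  assert (Hm : r0 < m < r1) by (unfold m; lra).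
  pose proof (Hpos m Hm) as Hc.
  pose proof (Hrc r0 H0) as Hcont.
  apply continuity_pt_filterlim in Hcont.
  apply (proj1 (continuity_pt_locally rho r0)) with (eps := mkposreal _ Hc) in Hcont.
  destruct Hcont as [del Hdel].
  set (t := r0 + Rmin (del / 2) ((r1 - r0) / 2)).
  assert (Ht1 : 0 < Rmin (del / 2) ((r1 - r0) / 2)).
  { apply Rmin_pos. pose proof (cond_pos del); lra. lra. }
  assert (Ht2 : Rmin (del / 2) ((r1 - r0) / 2) <= del / 2) by apply Rmin_l.
  assert (Ht3 : Rmin (del / 2) ((r1 - r0) / 2) <= (r1 - r0) / 2) by apply Rmin_r.
  assert (Htr : r0 < t < r1) by (unfold t; lra).
  specialize (Hdel t). simpl in Hdel.
  rewrite (Hz0 r0) in Hdel by lra. rewrite (S9 t m) in Hdel by auto.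
  assert (Hb2 : ball r0 del t).
  { change (Rabs (t - r0) < del). rewrite Rabs_right; unfold t; pose proof (cond_pos del); lra. }
  specialize (Hdel Hb2). rewrite Rminus_0_r, Rabs_right in Hdel; lra.
Qed.
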